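(* For $r\ge0$ and integers $M\ge1$, $N\ge1$ let $$\eta(r,M,N):=\int_0^\infty\frac{1}{(1+e^{8r}\gamma^2)^M}\Big(\frac{\gamma^2}{1+\gamma^2}\Big)^N\frac{d\gamma}{\gamma^2}.$$ Then: (i) $\frac\pi2e^{-4r}c^{(M)}_1\le\eta(r,M,1)\le\frac\pi2e^{-4r}c^{(M-1)}_1$; (ii) if $M>N$: $\frac{1}{2^M2^N}e^{-8(M+1)r}\frac{1}{2M+1}\le\eta(r,M,N)\le e^{-8r(N-1)-4r}\frac\pi2c^{(M-N)}_N+e^{-8Mr}\frac{1}{2M-1}$; (iii) if $M\le N$: $\frac{1}{2^M2^N}e^{-8(M+1)r}\frac{1}{2M+1}\le\eta(r,M,N)\le e^{-8r(M-1)-4r}\frac\pi2c^{(0)}_M+e^{-8Mr}\frac{1}{2M-1}$.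
   Context: For integers $k\ge1$, $j\ge0$: $c^{(j)}_k:=\frac2\pi\int_0^\infty\Big(\frac{\gamma^2}{1+\gamma^2}\Big)^k\frac{1}{(1+\gamma^2)^j}\frac{d\gamma}{\gamma^2}=\frac1\pi\frac{\Gamma(j+\frac12)\Gamma(k-\frac12)}{\Gamma(j+k)}$, with $\Gamma$ the Gamma function. *)

(* Defs.v *)
From HB Require Import structures.
From mathcomp Require Import all_boot all_order all_algebra.
From mathcomp Require Import all_classical all_reals all_analysis.
Set Implicit Arguments. Unset Strict Implicit. Unset Printing Implicit Defensive.
Import Order.TTheory GRing.Theory Num.Theory.
Local Open Scope classical_set_scope.
Local Open Scope ring_scope.

Definition cjk (R : realType) (j k : nat) : \bar R :=
  ((2 / pi)%:E *
   \int[lebesgue_measure]_(g in `]0%R, +oo[%classic)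
      (((g ^+ 2 / (1 + g ^+ 2)) ^+ k * (1 + g ^+ 2) ^- j / g ^+ 2 : R)%:E))%E.

Definition eta_rMN (R : realType) (r : R) (M N : nat) : \bar R :=
  \int[lebesgue_measure]_(g in `]0%R, +oo[%classic)
     (((1 + expR (8 * r) * g ^+ 2) ^- M * (g ^+ 2 / (1 + g ^+ 2)) ^+ N
        / g ^+ 2 : R)%:E).

(* Main.v *)
Require Import Defs.
From HB Require Import structures.
From mathcomp Require Import all_boot all_order all_algebra.
From mathcomp Require Import all_classical all_reals all_analysis.
From mathcomp Require Import ring lra.
From mathcomp Require Import measurable_realfun.
Import Order.TTheory GRing.Theory Num.Theory numFieldNormedType.Exports.
Local Open Scope ring_scope.
Local Open Scope classical_set_scope.

Section Helpers.
Variable R : realType.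
Notation mu := (@lebesgue_measure R).

Definition Hc (j k : nat) (u : R) : R := (u ^+ 2) ^+ k.-1 / (1 + u ^+ 2) ^+ (k + j).
Lemma Hc_cont j k (x : R) : {for x, continuous (Hc j k)}.
Proof.
rewrite /Hc.
apply: continuousM.
  exact: (continuous_comp (@exprn_continuous R 2 x) (@exprn_continuous R k.-1 _)).
apply: continuousV.
  by rewrite expf_neq0 // gt_eqF // ltr_pwDl // sqr_ge0.
apply: (continuous_comp _ (@exprn_continuous R (k+j) _)).
apply: continuousD; first exact: cst_continuous.
exact: exprn_continuous.
Qed.

Lemma Hc_aux (p q : R) k j : p != 0 -> q != 0 ->
  (p / q) ^+ k.+1 * q ^- j / p = p ^+ k / q ^+ (k.+1 + j).
Proof.
move=> p0 q0.
have qk : q ^+ k != 0 by rewrite expf_neq0.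
have qj : q ^+ j != 0 by rewrite expf_neq0.
rewrite expr_div_n addSn !exprS exprD.
field.
by rewrite qk qj q0 p0.
Qed.
Lemma Hc_eq j k (u : R) : (1 <= k)%N -> 0 < u ->
  (u ^+ 2 / (1 + u ^+ 2)) ^+ k * (1 + u ^+ 2) ^- j / u ^+ 2 = Hc j k u.
Proof.
move=> + u0; rewrite /Hc; case: k => // k _ /=.
apply: Hc_aux; first by rewrite sqrf_eq0 gt_eqF.
by rewrite gt_eqF // ltr_pwDl // sqr_ge0.
Qed.



Lemma scaleI (G : R -> R) (b : R) : 0 < b -> (forall x, {for x, continuous G}) ->
  (forall x, 0 <= G x) ->
  (\int[mu]_(x in `]0%R, +oo[) (G x)%:E =
   \int[mu]_(x in `]0%R, +oo[) (b * G (b * x))%:E)%E.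
Proof.
move=> b0 cG G0.
pose F := fun x : R => b * x.
have dFx x : derivable F x 1.
  apply: derivableM; [exact: derivable_cst|]. first [exact: (@derivable_id R R^o)| exact: (@derivable_id _ R^o) | apply: ex_derive].
have cF x : {for x, continuous F}.
  by apply: continuousM; [exact: cst_continuous|exact: cvg_id].
have dF : F^`() = fun=> b.
  apply/funext => x; rewrite /F (derive1Ml (f:=id)) ?derive1_id ?mulr1 //.
have H := @increasing_ge0_integration_by_substitutiony R F G 0.
rewrite /F mulr0 in H.
have mG : measurable_fun setT G by apply: measurable_realfun.continuous_measurable_fun.
have mGF : measurable_fun setT (fun x => b * G (b * x)).
  apply: measurable_realfun.continuous_measurable_fun => x.
  apply: continuousM; first exact: cst_continuous.
  exact: (continuous_comp (cF x) (cG _)).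
rewrite integral_itv_obnd_cbnd; last first.
  by apply/measurable_realfun.measurable_EFinP; exact: measurable_funTS.
rewrite H; last 8 first.
- by move=> x y _ _ xy; rewrite /F ltr_pM2l.
- by rewrite dF => x _; exact: cst_continuous.
- by rewrite dF; exact: is_cvg_cst.
- by rewrite dF; exact: is_cvg_cst.
- split; first by move=> x _; exact: dFx.
  by apply: cvg_at_right_filter; exact: cF.
- apply/cvgryPge => A.
  by near do rewrite -ler_pdivrMl //; apply: nbhs_pinfty_ge; exact: num_real.
- exact: continuous_subspaceT.
- by move=> x _; exact: G0.
rewrite -integral_itv_obnd_cbnd; last first.
  apply/measurable_realfun.measurable_EFinP; apply: measurable_funTS.
  apply: measurable_realfun.continuous_measurable_fun => x.
  apply: continuousM; last by rewrite dF; exact: cst_continuous.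
  exact: (continuous_comp (cF x) (cG _)).
apply: eq_integral => x _ /=.
by rewrite dF /F mulrC.
Unshelve. all: by end_near.
Qed.
Lemma dF (M : nat) (x : R) : x != 0 ->
  is_derive x 1 (fun y : R => - ((M.*2.+1)%:R * y ^+ (M.*2.+1))^-1) (((x ^+ 2) ^+ M.+1)^-1).
Proof.
move=> x0.
apply: is_derive_eq.
apply: is_deriveN. apply: is_deriveV. by rewrite mulf_neq0 // ?pnatr_eq0 // expf_neq0. apply: is_deriveZ. have := is_deriveX (M.*2.+1) (is_derive_id x 1). rewrite exprfctE. move=> h; exact: h.
have n0 : (M.*2.+1)%:R != 0 :> R by rewrite pnatr_eq0.
rewrite /=.
set n := (M.*2.+1)%:R in n0 *.
rewrite /GRing.scale /= (exprS x M.*2) -mul2n exprM [in RHS]exprS.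
have y0 : (x ^+ 2) ^+ M != 0 by rewrite expf_neq0 // sqrf_eq0.
move: y0; set y := (x ^+ 2) ^+ M => y0.
move: n0; move: n => n n0.
field.
by rewrite y0 n0 x0.
Qed.

Lemma limF (M : nat) : (((M.*2.+1)%:R * x ^+ M.*2.+1)^-1 @[x --> +oo] --> (0:R)).
Proof.
  apply/(@gtr0_cvgV0 _ _ _ _ (fun x : R => (M.*2.+1)%:R * x ^+ M.*2.+1)).
    near=> x. apply: mulr_gt0; first by rewrite ltr0n. apply: exprn_gt0. near: x. apply: nbhs_pinfty_gt; exact: num_real.
  apply/cvgryPge => A; near=> x.
  have x1 : 1 <= x by near: x; apply: nbhs_pinfty_ge; exact: num_real.
  have xA : A <= x by near: x; apply: nbhs_pinfty_ge; exact: num_real.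
  apply: (le_trans xA); apply: (le_trans (ler_eXnr (ltn0Sn _) x1)).
  apply: ler_peMl; first by apply: exprn_ge0; exact: (le_trans ler01 x1).
  by rewrite ler1n.
Unshelve. all: by end_near.
Qed.

Lemma tailI (M : nat) :
  (\int[lebesgue_measure]_(x in `[1%R, +oo[) ((((x : R) ^+ 2) ^+ M.+1)^-1)%:E =
   (((M.*2.+1)%:R : R)^-1)%:E)%E.
Proof.
pose F := fun y : R => - ((M.*2.+1)%:R * y ^+ (M.*2.+1))^-1.
have x0 (x : R) : 1 <= x -> x != 0 by move=> x1; rewrite gt_eqF // (lt_le_trans ltr01).
rewrite (@ge0_continuous_FTC2y R (fun x => ((x ^+ 2) ^+ M.+1)^-1) F 1 0); last 6 first.
- by move=> x _; rewrite invr_ge0 exprn_ge0 // sqr_ge0.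
- have c (y : R) : y != 0 -> {for y, continuous (fun y : R => ((y ^+ 2) ^+ M.+1)^-1)}.
    move=> y0; apply: continuousV; first by rewrite expf_neq0 // sqrf_eq0.
    exact: (continuous_comp (@exprn_continuous R 2 y) (@exprn_continuous R M.+1 _)).
  apply: continuous_in_subspaceT => x; rewrite inE /= in_itv /= andbT => x1.
  exact: (c x (x0 _ x1)).
- rewrite -oppr0; apply: cvgN.
  exact: limF.
- move=> x x1; apply: ex_derive; apply: dF; apply: x0; exact: ltW.
- apply: cvg_at_right_filter.
  apply: differentiable_continuous; apply/derivable1_diffP.
  apply: ex_derive; apply: dF; exact: oner_neq0.
- move=> x; rewrite in_itv /= andbT => x1.
  rewrite derive1E; apply: derive_val; apply: dF; apply: x0; exact: ltW.
by rewrite -EFinB /F expr1n mulr1 sub0r opprK.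
Unshelve. all: by end_near.
Qed.

Lemma Hc_ge0 j k (u : R) : 0 <= Hc j k u.
Proof. by rewrite /Hc divr_ge0 // exprn_ge0 // ?addr_ge0 // sqr_ge0. Qed.

Lemma measE (f : R -> R) (D : set R) : (forall x, {for x, continuous f}) ->
  measurable_fun D (EFin \o f).
Proof.
move=> cf; apply/measurable_realfun.measurable_EFinP; apply: measurable_funTS.
exact: measurable_realfun.continuous_measurable_fun.
Qed.

Lemma cmp (f g : R -> R) : (forall x, {for x, continuous f}) ->
  (forall x, {for x, continuous g}) ->
  (forall x, 0 < x -> 0 <= f x) -> (forall x, 0 < x -> f x <= g x) ->
  (\int[mu]_(x in `]0%R, +oo[) (f x)%:E <= \int[mu]_(x in `]0%R, +oo[) (g x)%:E)%E.
Proof.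
move=> cf cg f0 fg; apply: ge0_le_integral => //.
- by move=> x; rewrite /= in_itv /= andbT => x0; rewrite lee_fin f0.
- exact: measE.
- exact: measE.
- by move=> x; rewrite /= in_itv /= andbT => x0; rewrite lee_fin fg.
Qed.

Lemma intZ (c : R) (g : R -> R) : 0 <= c -> (forall x, {for x, continuous g}) ->
  (forall x, 0 < x -> 0 <= g x) ->
  (c%:E * \int[mu]_(x in `]0%R, +oo[) (g x)%:E =
   \int[mu]_(x in `]0%R, +oo[) (c * g x)%:E)%E.
Proof.
move=> c0 cg g0; rewrite -ge0_integralZl //.
- exact: measE.
- by move=> x; rewrite /= in_itv /= andbT => x0; rewrite lee_fin g0.
Qed.

Lemma cjk_eq j k (b : R) : (1 <= k)%N -> 0 < b ->
  cjk R j k = ((2 / pi)%:E * \int[mu]_(x in `]0%R, +oo[) (b * Hc j k (b * x))%:E)%E.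
Proof.
move=> k1 b0; rewrite /cjk; congr (_ * _)%E.
rewrite -scaleI //.
- apply: eq_integral => x; rewrite inE /= in_itv /= andbT => x0.
  by rewrite Hc_eq.
- exact: Hc_cont.
- exact: Hc_ge0.
Qed.

Definition E (b : R) (M N : nat) (x : R) : R := ((1 + (b * x) ^+ 2) ^+ M)^-1 * Hc 0 N x.

Lemma E_cont b M N (x : R) : {for x, continuous (E b M N)}.
Proof.
rewrite /E; apply: continuousM; last exact: Hc_cont.
apply: continuousV; first by rewrite expf_neq0 // gt_eqF // ltr_pwDl // sqr_ge0.
apply: (continuous_comp _ (@exprn_continuous R M _)).
apply: continuousD; first exact: cst_continuous.
apply: (continuous_comp _ (@exprn_continuous R 2 _)).
by apply: continuousM; [exact: cst_continuous|exact: cvg_id].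
Qed.

Lemma E_ge0 b M N (x : R) : 0 <= E b M N x.
Proof.
by rewrite /E mulr_ge0 ?Hc_ge0 // invr_ge0 exprn_ge0 // addr_ge0 // sqr_ge0.
Qed.

Lemma eta_eq (r : R) M N : (1 <= N)%N ->
  eta_rMN r M N = (\int[mu]_(x in `]0%R, +oo[) (E (expR (4 * r)) M N x)%:E)%E.
Proof.
move=> N1; rewrite /eta_rMN; apply: eq_integral => x; rewrite inE /= in_itv /= andbT => x0.
have e8 : expR (8 * r) = expR (4 * r) ^+ 2.
  by rewrite expr2 -expRD; congr expR; ring.
rewrite /E -(@Hc_eq 0 N x N1 x0) expr0 invr1 mulr1 -mulrA e8 [(expR (4 * r) * x) ^+ 2]exprMn.
by [].
Qed.

Lemma b_ge1 (r : R) : 0 <= r -> 1 <= expR (4 * r).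
Proof. by move=> r0; apply: le_trans (expR_ge1Dx _); lra. Qed.

Lemma mulx_cont (b x : R) : {for x, continuous (fun x => b * x)}.
Proof. by apply: continuousM; [exact: cst_continuous|exact: cvg_id]. Qed.

Lemma HcS_cont (b : R) j k (x : R) : {for x, continuous (fun x => b * Hc j k (b * x))}.
Proof.
apply: continuousM; first exact: cst_continuous.
exact: (continuous_comp (mulx_cont b x) (Hc_cont _ _ _)).
Qed.

Lemma HcB_cont (b : R) j k (x : R) : {for x, continuous (fun x => Hc j k (b * x))}.
Proof. exact: (continuous_comp (mulx_cont b x) (Hc_cont _ _ _)). Qed.

Lemma PQ (b x : R) : 1 <= b -> 1 + x ^+ 2 <= 1 + (b * x) ^+ 2.
Proof.
move=> b1; rewrite lerD2l exprMn ler_peMl ?sqr_ge0 //.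
by rewrite expr_ge1 // (le_trans ler01 b1).
Qed.

Lemma ineq1 (P Q : R) M : 0 < Q -> Q <= P ->
  1 / P ^+ (1 + M) <= (P ^+ M)^-1 * (1 / Q ^+ (1 + 0)).
Proof.
move=> Q0 QP; have P0 : 0 < P by apply: lt_le_trans QP.
rewrite !div1r addn0 expr1 -invfM lef_pV2 ?posrE ?mulr_gt0 ?exprn_gt0 //.
by rewrite add1n exprSr ler_wpM2l // exprn_ge0 // ltW.
Qed.

Lemma cstK (b y : R) : 0 < b -> (pi / 2 * b^-1 * (2 / pi)) * (b * y) = y.
Proof.
move=> b0; have pi0 : (pi : R) != 0 by rewrite gt_eqF // pi_gt0.
have b0' : b != 0 by rewrite gt_eqF.
move: pi0; move: (pi : R) => p p0.
by field; rewrite p0 b0'.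
Qed.

Lemma part1a (r : R) M : 0 <= r -> (1 <= M)%N ->
  (((pi / 2) * expR (- (4 * r)))%:E * cjk R M 1 <= eta_rMN r M 1)%E.
Proof.
move=> r0 M1; have b1 := b_ge1 r r0; set b := expR (4 * r) in b1 *.
have b0 : 0 < b by apply: lt_le_trans b1.
have c0 : 0 <= pi / 2 * expR (- (4 * r)) * (2 / pi).
  by rewrite expRN -/b !mulr_ge0 // ?invr_ge0 ?pi_ge0 ?ltW.
have g0 : forall x : R, 0 < x -> 0 <= b * Hc M 1 (b * x).
  by move=> x _; rewrite mulr_ge0 ?Hc_ge0 ?ltW.
rewrite (@cjk_eq M 1 b) // muleA -EFinM (intZ _ _ c0 (HcS_cont b M 1) g0).
rewrite eta_eq // -/b.
have -> : (\int[mu]_(x in `]0%R, +oo[)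
      (pi / 2 * expR (- (4 * r)) * (2 / pi) * (b * Hc M 1 (b * x)))%:E =
   \int[mu]_(x in `]0%R, +oo[) (Hc M 1 (b * x))%:E)%E.
  by apply: eq_integral => x _; rewrite expRN -/b cstK.
apply: (cmp _ _ (HcB_cont b M 1) (E_cont b M 1)).
- by move=> x _; exact: Hc_ge0.
move=> x x0; rewrite /E /Hc /= !expr0.
apply: ineq1; last exact: PQ.
by rewrite ltr_pwDl // sqr_ge0.
Qed.

Lemma CHcS_cont (C b : R) j k (x : R) :
  {for x, continuous (fun x => C * (b * Hc j k (b * x)))}.
Proof. by apply: continuousM; [exact: cst_continuous|exact: HcS_cont]. Qed.

Lemma upper_gen (r c : R) j k M N : 0 <= r -> (1 <= k)%N -> (1 <= N)%N -> 0 <= c ->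
  (forall x, 0 < x -> E (expR (4 * r)) M N x <=
     c * (2 / pi) * (expR (4 * r) * Hc j k (expR (4 * r) * x))) ->
  (eta_rMN r M N <= c%:E * cjk R j k)%E.
Proof.
move=> r0 k1 N1 c0 H; have b1 := b_ge1 r r0; set b := expR (4 * r) in b1 H *.
have b0 : 0 < b by apply: lt_le_trans b1.
have c0' : 0 <= c * (2 / pi) by rewrite mulr_ge0 // divr_ge0 // pi_ge0.
have g0 : forall x : R, 0 < x -> 0 <= b * Hc j k (b * x).
  by move=> x _; rewrite mulr_ge0 ?Hc_ge0 ?ltW.
rewrite (@cjk_eq j k b) // muleA -EFinM (intZ _ _ c0' (HcS_cont b j k) g0).
rewrite eta_eq // -/b.
apply: (cmp _ _ (E_cont b M N) (CHcS_cont (c * (2 / pi)) b j k)).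
- by move=> x _; exact: E_ge0.
exact: H.
Qed.

Lemma part1b (r : R) M : 0 <= r -> (1 <= M)%N ->
  (eta_rMN r M 1 <= ((pi / 2) * expR (- (4 * r)))%:E * cjk R (M - 1) 1)%E.
Proof.
move=> r0 M1; apply: upper_gen => //.
  by rewrite mulr_ge0 ?expR_ge0 // divr_ge0 // pi_ge0.
move=> x x0; rewrite expRN cstK ?expR_gt0 //.
rewrite /E /Hc /= !expr0 addn0 expr1 (subnKC M1) !div1r.
apply: ler_piMr; first by rewrite invr_ge0 exprn_ge0 // addr_ge0 // sqr_ge0.
by rewrite invf_le1 ?lerDl ?sqr_ge0 // ltr_pwDl // sqr_ge0.
Qed.

Lemma cst2 (r : R) n : (1 <= n)%N ->
  expR (- (8 * r * (n%:R - 1)) - 4 * r) * (pi / 2) * (2 / pi) * expR (4 * r) =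
  ((expR (4 * r) ^+ 2) ^+ (n - 1))^-1.
Proof.
move=> n1; have pi0 : (pi : R) != 0 by rewrite gt_eqF // pi_gt0.
have e8 : expR (8 * r) = expR (4 * r) ^+ 2.
  by rewrite expr2 -expRD; congr expR; ring.
have -> : n%:R - 1 = (n - 1)%:R :> R by rewrite natrB.
rewrite expRD !expRN expRM_natr e8.
have a0 := expR_gt0 (4 * r).
have B0 : (expR (4 * r) ^+ 2) ^+ (n - 1) != 0 by rewrite !expf_neq0 // gt_eqF.
move: B0 pi0; move: ((expR (4 * r) ^+ 2) ^+ (n - 1)) (pi : R) => B p B0 p0.
move: a0; move: (expR (4 * r)) => a a0.
by field; rewrite p0 B0 gt_eqF.
Qed.

Lemma part2b (r : R) M N : 0 <= r -> (1 <= M)%N -> (1 <= N)%N -> (N < M)%N ->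
  (eta_rMN r M N <=
     (expR (- (8 * r * (N%:R - 1)) - 4 * r) * (pi / 2))%:E * cjk R (M - N) N)%E.
Proof.
move=> r0 M1 N1 NM; apply: upper_gen => //.
  by rewrite mulr_ge0 ?expR_ge0 // divr_ge0 // pi_ge0.
move=> x x0; rewrite mulrA cst2 //.
rewrite /E /Hc /= addn0 (subnKC (ltnW NM)) -!subn1.
rewrite [(expR (4 * r) * x) ^+ 2]exprMn [(_ ^+ 2 * x ^+ 2) ^+ _]exprMn.
set B := (expR (4 * r) ^+ 2) ^+ (N - 1).
set P := 1 + _; set Q := 1 + _.
have B0 : B != 0 by rewrite expf_neq0 // expf_neq0 // gt_eqF // expR_gt0.
have -> : B^-1 * (B * (x ^+ 2) ^+ (N - 1) / P ^+ M) = (P ^+ M)^-1 * (x ^+ 2) ^+ (N - 1).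
  by rewrite mulrA mulrA mulVf // mul1r mulrC.
have P0 : 0 <= P by rewrite /P addr_ge0 // mulr_ge0 // sqr_ge0.
apply: ler_wpM2l; first by rewrite invr_ge0 exprn_ge0.
apply: ler_piMr; first by rewrite exprn_ge0 // sqr_ge0.
by rewrite invf_le1 ?exprn_ege1 ?lerDl ?sqr_ge0 // exprn_gt0 // ltr_pwDl // sqr_ge0.
Qed.

Lemma part3b (r : R) M N : 0 <= r -> (1 <= M)%N -> (1 <= N)%N -> (M <= N)%N ->
  (eta_rMN r M N <=
     (expR (- (8 * r * (M%:R - 1)) - 4 * r) * (pi / 2))%:E * cjk R 0 M)%E.
Proof.
move=> r0 M1 N1 MN; apply: upper_gen => //.
  by rewrite mulr_ge0 ?expR_ge0 // divr_ge0 // pi_ge0.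
move=> x x0; rewrite mulrA cst2 //.
have HN := @Hc_eq 0 N x N1 x0; have HM := @Hc_eq 0 M x M1 x0.
have Q0 : 0 < 1 + x ^+ 2 by rewrite ltr_pwDl // sqr_ge0.
rewrite /E [Hc 0 M _]/Hc /= addn0 -!subn1.
rewrite [(expR (4 * r) * x) ^+ 2]exprMn [(_ ^+ 2 * x ^+ 2) ^+ _]exprMn.
set B := (expR (4 * r) ^+ 2) ^+ (M - 1).
set P := 1 + expR (4 * r) ^+ 2 * x ^+ 2.
have B0 : B != 0 by rewrite expf_neq0 // expf_neq0 // gt_eqF // expR_gt0.
have -> : B^-1 * (B * (x ^+ 2) ^+ (M - 1) / P ^+ M) = (P ^+ M)^-1 * (x ^+ 2) ^+ (M - 1).
  by rewrite mulrA mulrA mulVf // mul1r mulrC.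
have P0 : 0 <= P by rewrite /P addr_ge0 // mulr_ge0 // sqr_ge0.
apply: ler_wpM2l; first by rewrite invr_ge0 exprn_ge0.
apply: (le_trans (y := Hc 0 M x)); last first.
  rewrite /Hc addn0 subn1; apply: ler_piMr; first by rewrite exprn_ge0 // sqr_ge0.
  by rewrite invf_le1 ?exprn_ege1 ?lerDl ?sqr_ge0 // exprn_gt0.
rewrite -HN -HM.
apply: ler_wpM2r; first by rewrite invr_ge0 sqr_ge0.
apply: ler_wpM2r; first by rewrite invr_ge0 exprn_ge0 // ltW.
apply: ler_wiXn2l => //.
  by rewrite divr_ge0 ?sqr_ge0 // ltW.
by rewrite ler_pdivrMr // mul1r lerDr.
Qed.

Lemma pw_low (b x : R) M N : 1 <= b -> 1 <= x -> (1 <= N)%N ->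
  ((2 * b ^+ 2) ^+ M * 2 ^+ N)^-1 * ((x ^+ 2) ^+ M.+1)^-1 <= E b M N x.
Proof.
move=> b1 x1 N1.
have x0 : 0 < x by apply: lt_le_trans x1.
have b0 : 0 < b by apply: lt_le_trans b1.
have x2 : 1 <= x ^+ 2 by apply: exprn_ege1.
have bx2 : 1 <= (b * x) ^+ 2 by apply: exprn_ege1; apply: mulr_ege1.
have l1 : ((2 * b ^+ 2 * x ^+ 2) ^+ M)^-1 <= ((1 + (b * x) ^+ 2) ^+ M)^-1.
  rewrite lef_pV2 ?posrE ?exprn_gt0 ?mulr_gt0 ?exprn_gt0 ?ltr_pwDl ?sqr_ge0 //.
  apply: lerXn2r.
  - by rewrite nnegrE addr_ge0 // sqr_ge0.
  - rewrite nnegrE; apply: mulr_ge0; last exact: sqr_ge0.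
    by apply: mulr_ge0 => //; exact: sqr_ge0.
  - rewrite -mulrA -exprMn; lra.
have l2 : (2 ^+ N * x ^+ 2)^-1 <= Hc 0 N x.
  rewrite /Hc addn0.
  apply: (le_trans (y := (x ^+ 2) ^+ N.-1 / (2 * x ^+ 2) ^+ N)).
    case: N N1 => // n _ /=.
    have : x ^+ 2 != 0 by rewrite sqrf_eq0 gt_eqF.
    move: (x ^+ 2) => p p0.
    rewrite exprMn !exprS.
    have : p ^+ n != 0 by rewrite expf_neq0.
    have : 2 ^+ n != 0 :> R by rewrite expf_neq0.
    move: (p ^+ n) (2 ^+ n : R) => q t t0 q0.
    rewrite le_eqVlt; apply/orP; left; apply/eqP.
    by field; rewrite t0 q0 p0.
  apply: ler_wpM2l; first by rewrite exprn_ge0 // sqr_ge0.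
  rewrite lef_pV2 ?posrE ?exprn_gt0 ?mulr_gt0 ?exprn_gt0 ?ltr_pwDl ?sqr_ge0 //.
  apply: lerXn2r.
  - by rewrite nnegrE addr_ge0 // sqr_ge0.
  - by rewrite nnegrE; apply: mulr_ge0 => //; exact: sqr_ge0.
  - lra.
have -> : ((2 * b ^+ 2) ^+ M * 2 ^+ N)^-1 * ((x ^+ 2) ^+ M.+1)^-1 =
    ((2 * b ^+ 2 * x ^+ 2) ^+ M)^-1 * (2 ^+ N * x ^+ 2)^-1.
  have : x ^+ 2 != 0 by rewrite sqrf_eq0 gt_eqF.
  have : 2 * b ^+ 2 != 0 by rewrite mulf_neq0 // sqrf_eq0 gt_eqF.
  move: (x ^+ 2) (2 * b ^+ 2) => p u u0 p0.
  rewrite exprS exprMn.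
  have : p ^+ M != 0 by rewrite expf_neq0.
  have : u ^+ M != 0 by rewrite expf_neq0.
  have : 2 ^+ N != 0 :> R by rewrite expf_neq0.
  move: (p ^+ M) (u ^+ M) (2 ^+ N : R) => q v t t0 v0 q0.
  by field; rewrite t0 v0 q0 p0.
have hb2 : 0 <= 2 * b ^+ 2 * x ^+ 2.
  by apply: mulr_ge0; [apply: mulr_ge0 => //; exact: sqr_ge0 | exact: sqr_ge0].
have h2 : 0 <= 2 ^+ N * x ^+ 2 by apply: mulr_ge0; [exact: exprn_ge0 | exact: sqr_ge0].
rewrite /E; apply: ler_pM => //.
- by rewrite invr_ge0 exprn_ge0.
- by rewrite invr_ge0.
Qed.

Lemma g_cont M : {within `[1, +oo[, continuous (fun x : R => ((x ^+ 2) ^+ M.+1)^-1)}.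
Proof.
have c (y : R) : y != 0 -> {for y, continuous (fun y : R => ((y ^+ 2) ^+ M.+1)^-1)}.
  move=> y0; apply: continuousV; first by rewrite expf_neq0 // sqrf_eq0.
  exact: (continuous_comp (@exprn_continuous R 2 y) (@exprn_continuous R M.+1 _)).
apply: continuous_in_subspaceT => x; rewrite inE /= in_itv /= andbT => x1.
by apply: c; rewrite gt_eqF // (lt_le_trans ltr01).
Qed.

Lemma real_low (b : R) M N : 1 <= b ->
  1 / (2 ^+ M * 2 ^+ N) * ((b ^+ 2) ^+ M.+1)^-1 / (2 * M%:R + 1) <=
  ((2 * b ^+ 2) ^+ M * 2 ^+ N)^-1 / (2 * M%:R + 1).
Proof.
move=> b1.
have B1 : 1 <= b ^+ 2 by apply: exprn_ege1.
have B0 : 0 < b ^+ 2 by apply: lt_le_trans B1.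
move: (b ^+ 2) B1 B0 => B B1 B0.
have n0 : 0 < 2 * M%:R + 1 :> R by rewrite ltr_pwDr // mulr_ge0.
apply: ler_wpM2r; first by rewrite invr_ge0 ltW.
rewrite div1r exprMn [2 ^+ M * B ^+ M * _]mulrAC [(2 ^+ M * 2 ^+ N * _)^-1]invfM.
apply: ler_wpM2l; first by rewrite invr_ge0 mulr_ge0 // exprn_ge0.
rewrite lef_pV2 ?posrE ?exprn_gt0 // exprS ler_peMl // exprn_ge0 // ltW //.
Qed.

Lemma lowb (r : R) M N : 0 <= r -> (1 <= M)%N -> (1 <= N)%N ->
  ((1 / (2 ^+ M * 2 ^+ N) * expR (- (8 * (M%:R + 1) * r)) / (2 * M%:R + 1))%:E
     <= eta_rMN r M N)%E.
Proof.
move=> r0 M1 N1; have b1 := b_ge1 r r0.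
have e8 : expR (8 * r) = expR (4 * r) ^+ 2.
  by rewrite expr2 -expRD; congr expR; ring.
have -> : expR (- (8 * (M%:R + 1) * r)) = ((expR (4 * r) ^+ 2) ^+ M.+1)^-1.
  by rewrite expRN natr1 mulrAC expRM_natr e8.
set b := expR (4 * r) in b1 *.
have b0 : 0 < b by apply: lt_le_trans b1.
rewrite eta_eq // -/b.
set K := ((2 * b ^+ 2) ^+ M * 2 ^+ N)^-1.
have K0 : 0 <= K.
  rewrite invr_ge0 mulr_ge0 // exprn_ge0 //.
  by apply: mulr_ge0 => //; exact: sqr_ge0.
have mg : measurable_fun (`[1%R, +oo[ : set R) (EFin \o (fun x : R => ((x ^+ 2) ^+ M.+1)^-1)).
  apply/measurable_EFinP; apply: subspace_continuous_measurable_fun => //.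
  exact: g_cont.
have mKg : measurable_fun (`[1%R, +oo[ : set R) (EFin \o (fun x : R => K * ((x ^+ 2) ^+ M.+1)^-1)).
  apply/measurable_EFinP; apply: subspace_continuous_measurable_fun => //.
  have c (y : R) : y != 0 -> {for y, continuous (fun y : R => K * ((y ^+ 2) ^+ M.+1)^-1)}.
    move=> y0; apply: continuousM; first exact: cst_continuous.
    apply: continuousV; first by rewrite expf_neq0 // sqrf_eq0.
    exact: (continuous_comp (@exprn_continuous R 2 y) (@exprn_continuous R M.+1 _)).
  apply: continuous_in_subspaceT => x; rewrite inE /= in_itv /= andbT => x1.
  by apply: c; rewrite gt_eqF // (lt_le_trans ltr01).
have tail : (\int[mu]_(x in `[1%R, +oo[) (K * ((x ^+ 2) ^+ M.+1)^-1)%:E =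
    (K / (M.*2.+1)%:R)%:E)%E.
  transitivity (K%:E * \int[mu]_(x in `[1%R, +oo[) ((((x : R) ^+ 2) ^+ M.+1)^-1)%:E)%E.
    rewrite -ge0_integralZl //.
    by move=> x; rewrite /= in_itv /= andbT => x1; rewrite lee_fin invr_ge0 exprn_ge0 // sqr_ge0.
  by rewrite tailI -EFinM.
apply: (@le_trans _ _ (K / (M.*2.+1)%:R)%:E).
  have -> : (M.*2.+1)%:R = 2 * M%:R + 1 :> R by rewrite -addn1 natrD -mul2n natrM.
  by rewrite lee_fin real_low.
rewrite -tail.
apply: (@le_trans _ _ (\int[mu]_(x in `[1%R, +oo[) (E b M N x)%:E)%E).
  apply: ge0_le_integral => //.
  - by move=> x; rewrite /= in_itv /= andbT => x1; rewrite lee_fin mulr_ge0 // invr_ge0 exprn_ge0 // sqr_ge0.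
  - exact: measE (E_cont b M N).
  - by move=> x; rewrite /= in_itv /= andbT => x1; rewrite lee_fin pw_low.
apply: ge0_subset_integral => //.
- exact: measE (E_cont b M N).
- by move=> x _; rewrite lee_fin E_ge0.
- by move=> x; rewrite /= !in_itv /= !andbT => x1; apply: lt_le_trans x1.
Qed.
End Helpers.

Theorem lemma5p4 (R : realType) (r : R) (M N : nat) :
  0 <= r -> (1 <= M)%N -> (1 <= N)%N ->
  (* (i) *)
  ((((pi / 2) * expR (- (4 * r)))%:E * cjk R M 1 <= eta_rMN r M 1)%E /\
   (eta_rMN r M 1 <= ((pi / 2) * expR (- (4 * r)))%:E * cjk R (M - 1) 1)%E) /\
  (* (ii) *)
  ((N < M)%N ->
     ((1 / (2 ^+ M * 2 ^+ N) * expR (- (8 * (M%:R + 1) * r)) / (2 * M%:R + 1))%:E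
        <= eta_rMN r M N)%E /\
     (eta_rMN r M N <=
        (expR (- (8 * r * (N%:R - 1)) - 4 * r) * (pi / 2))%:E * cjk R (M - N) N
        + (expR (- (8 * M%:R * r)) / (2 * M%:R - 1))%:E)%E) /\
  (* (iii) *)
  ((M <= N)%N ->
     ((1 / (2 ^+ M * 2 ^+ N) * expR (- (8 * (M%:R + 1) * r)) / (2 * M%:R + 1))%:E
        <= eta_rMN r M N)%E /\
     (eta_rMN r M N <=
        (expR (- (8 * r * (M%:R - 1)) - 4 * r) * (pi / 2))%:E * cjk R 0 M
        + (expR (- (8 * M%:R * r)) / (2 * M%:R - 1))%:E)%E).
Proof.
move=> r0 M1 N1.
have ex0 : forall k : R, (0 <= (expR k / (2 * M%:R - 1))%:E)%E.
  move=> k; rewrite lee_fin divr_ge0 ?expR_ge0 // subr_ge0.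
  have : (1 <= M%:R :> R) by rewrite ler1n.
  lra.
split; first by split; [exact: part1a | exact: part1b].
split.
  move=> NM; split; first exact: lowb.
  by apply: lee_paddr; [exact: ex0 | exact: part2b].
move=> MN; split; first exact: lowb.
by apply: lee_paddr; [exact: ex0 | exact: part3b].
Qed.
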